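(* Let $n=2$, let $O_1=\{p\in M: v_1(p)\ge v_2(p)\}$, $O_2=\{q\in M: v_1(q)<v_2(q)\}$, and assume that in the allocation $(O_1,O_2)$ agent 2 strongly envies agent 1. Let $\mathrm{OPT}$ be the maximum social welfare $v_1(A_1)+v_2(A_2)$ over all EF1 allocations $(A_1,A_2)$, and let $\mathrm{OPT}(C_2)$ be the maximum social welfare over all allocations in which agent 2 does not strongly envy agent 1. Then $\mathrm{OPT}=\mathrm{OPT}(C_2)$.
   Context: Two agents with additive valuations $v_1,v_2:2^M\to\mathbb{R}_{\ge0}$ over items $M=[m]$; an allocation $(A_1,A_2)$ is a partition of $M$. Agent $i$ strongly envies agent $j$ if $A_j\ne\emptyset$ and $v_i(A_i)<v_i(A_j\setminus\{g\})$ for every $g\in A_j$. An allocation is EF1 if neither agent strongly envies the other (an agent never strongly envies an empty bundle). *)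

(* Defs.v *)
From HB Require Import structures.
From mathcomp Require Import all_boot all_order all_algebra.
Set Implicit Arguments. Unset Strict Implicit. Unset Printing Implicit Defensive.
Import Order.TTheory GRing.Theory Num.Theory.
Local Open Scope ring_scope.

Definition bval (R : realFieldType) (M : finType) (v : M -> R) (S : {set M}) : R :=
  \sum_(g in S) v g.

Definition strongly_envies (R : realFieldType) (M : finType) (v : M -> R)
  (Ai Aj : {set M}) : bool :=
  (Aj != set0) && [forall g in Aj, bval v Ai < bval v (Aj :\ g)].

(* An allocation (A1, A2) of M between two agents is encoded by A1, with A2 = ~: A1. *)
Definition EF1 (R : realFieldType) (M : finType) (v1 v2 : M -> R) (A1 : {set M}) : bool :=
  ~~ strongly_envies v1 A1 (~: A1) && ~~ strongly_envies v2 (~: A1) A1.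

Definition C2 (R : realFieldType) (M : finType) (v1 v2 : M -> R) (A1 : {set M}) : bool :=
  ~~ strongly_envies v2 (~: A1) A1.

Definition welfare (R : realFieldType) (M : finType) (v1 v2 : M -> R) (A1 : {set M}) : R :=
  bval v1 A1 + bval v2 (~: A1).

(* Maximum welfare over allocations satisfying P (welfare is >= 0, and P-allocations
   exist in the uses below, so the default 0 is harmless). *)
Definition OPT_over (R : realFieldType) (M : finType) (v1 v2 : M -> R)
  (P : pred {set M}) : R :=
  \big[Num.max/0]_(A1 : {set M} | P A1) welfare v1 v2 A1.

(* Main.v *)
Require Import Defs.
From HB Require Import structures.
From mathcomp Require Import all_boot all_order all_algebra.
From mathcomp Require Import ring lra.
Import Order.TTheory GRing.Theory Num.Theory.
Local Open Scope ring_scope.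

Lemma bval_sub (R : realFieldType) (M : finType) (v : M -> R) (A B : {set M}) :
  (forall g, 0 <= v g) -> A \subset B -> bval v A <= bval v B.
Proof.
move=> hv sAB; rewrite /bval [X in _ <= X](big_setID A) /= (setIidPr sAB).
by rewrite lerDl sumr_ge0.
Qed.

Lemma bvalD1 (R : realFieldType) (M : finType) (v : M -> R) (A : {set M}) g :
  g \in A -> bval v A = v g + bval v (A :\ g).
Proof.
move=> gA; rewrite /bval (bigD1 g gA) /=; congr (_ + _).
by apply: eq_bigl => x; rewrite !inE andbC.
Qed.

Lemma bmax_le (R : realFieldType) (M : finType) (F : {set M} -> R) (P : pred {set M}) x :
  0 <= x -> (forall A, P A -> F A <= x) -> \big[Num.max/0]_(A | P A) F A <= x.
Proof.
move=> h0 hF; apply: (big_ind (fun y => y <= x)) => //.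
by move=> a b ha hb; rewrite ge_max ha hb.
Qed.

Lemma le_bmax (R : realFieldType) (M : finType) (F : {set M} -> R) (P : pred {set M}) A :
  P A -> F A <= \big[Num.max/0]_(A | P A) F A.
Proof. by move=> PA; rewrite (bigD1 A PA) /= le_max lexx. Qed.

Arguments bval_sub {R M v A B}.
Arguments bvalD1 {R M v A g}.
Arguments bmax_le {R M F P x}.
Arguments le_bmax {R M F P A}.

Theorem lemma1 (R : realFieldType) (M : finType) (v1 v2 : M -> R)
  (hv1 : forall g, 0 <= v1 g) (hv2 : forall g, 0 <= v2 g) :
  let O1 := [set p : M | v2 p <= v1 p] in
  let O2 := [set q : M | v1 q < v2 q] in
  strongly_envies v2 O2 O1 ->
  OPT_over v1 v2 (EF1 v1 v2) = OPT_over v1 v2 (C2 v1 v2).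
Proof.
move=> O1 O2 hO.
set W := OPT_over v1 v2 (C2 v1 v2).
have wge0 : forall A, 0 <= welfare v1 v2 A.
  by move=> A; rewrite /welfare addr_ge0 // /bval sumr_ge0.
have C20 : C2 v1 v2 set0 by rewrite /C2 /strongly_envies eqxx.
have W0 : 0 <= W by exact: le_trans (wge0 set0) (@le_bmax _ _ (welfare v1 v2) (C2 v1 v2) set0 C20).
have leW : forall A, C2 v1 v2 A -> welfare v1 v2 A <= W by move=> A hA; exact: (@le_bmax _ _ (welfare v1 v2) (C2 v1 v2) A hA).
have [A0 [CA0 wA0]] : exists A, C2 v1 v2 A /\ W <= welfare v1 v2 A.
  rewrite /W /OPT_over.
  apply: (big_ind (fun y => exists A, C2 v1 v2 A /\ y <= welfare v1 v2 A)).
  - by exists set0; split => //; apply: wge0.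
  - move=> a b [A [hA ha]] [B [hB hb]].
    case: (leP a b) => _; [by exists B | by exists A].
  - by move=> A hA; exists A.
pose Q := fun A => C2 v1 v2 A && (W <= welfare v1 v2 A).
have QA0 : Q A0 by rewrite /Q CA0 wA0.
case: (@arg_maxnP _ A0 Q (fun A => #|A|) QA0) => A /andP [CA wA] maxA.
have EA : EF1 v1 v2 A.
  rewrite /EF1 -/(C2 v1 v2 A) CA andbT.
  apply/negP => /andP [ne /forallP env].
  have env' : forall g, g \in ~: A -> bval v1 A < bval v1 (~: A :\ g).
    by move=> g gin; have := env g; rewrite gin.
  have swapC2 : (exists g, (g \in ~: A) /\ bval v2 (~: A :\ g) <= bval v2 A) ->
                C2 v1 v2 (~: A).
    move=> [g [gin hg]]; rewrite /C2 /strongly_envies setCK negb_and; apply/orP; right.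
    rewrite negb_forall; apply/existsP; exists g; rewrite gin /=; by rewrite -leNgt.
  have wswap : welfare v1 v2 (~: A) = bval v1 (~: A) + bval v2 A by rewrite /welfare setCK.
  case: (boolP [exists g in ~: A, v2 g <= v1 g]).
  - move/existsP => [g /andP [gin hg]].
    have gA : g \notin A by rewrite inE in gin.
    have Bdef : welfare v1 v2 (g |: A) = welfare v1 v2 A + (v1 g - v2 g).
      rewrite /welfare /bval (big_setU1 _ gA) /=.
      rewrite [in RHS](bigD1 g gin) /=.
      have -> : \sum_(i in ~: (g |: A)) v2 i = \sum_(i in ~: A | i != g) v2 i.
        by apply: eq_bigl => x; rewrite !inE negb_or andbC.
      by ring.
    case: (boolP (C2 v1 v2 (g |: A))) => hB.
    + have : (#|g |: A| <= #|A|)%N.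
        apply: maxA; rewrite /Q hB /= Bdef; apply: le_trans wA _.
        by rewrite lerDl subr_ge0.
      by rewrite cardsU1 gA add1n ltnn.
    + move: hB; rewrite /C2 negbK => /andP [_ /forallP /(_ g)].
      rewrite setU11 /= setU1K // => h2.
      have e2 : ~: (g |: A) = ~: A :\ g.
        by apply/setP => x; rewrite !inE negb_or andbC.
      rewrite e2 in h2.
      have hC := swapC2 (ex_intro _ g (conj gin (ltW h2))).
      have : welfare v1 v2 (~: A) <= W by apply: leW.
      apply/negP; rewrite -ltNge; apply: le_lt_trans wA _.
      have e1 := @bvalD1 _ _ v1 _ _ gin; have e3 := @bvalD1 _ _ v2 _ _ gin; have h1 := env' g gin.
      rewrite wswap /welfare e1 e3; lra.
  - rewrite negb_exists => /forallP hall.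
    have sub2 : ~: A \subset O2.
      apply/subsetP => x xin; have := hall x; rewrite xin /= inE -ltNge => //.
    have sub1 : O1 \subset A.
      apply/subsetP => x; rewrite inE => hx; apply/negPn/negP => xin.
      by have := hall x; rewrite inE xin /= hx.
    move: hO => /andP [neO /forallP hO].
    have [h hh] : exists h, h \in O1 by apply/set0Pn.
    have := hO h; rewrite hh /= => hlt.
    have lt2 : bval v2 (~: A) < bval v2 A.
      apply: le_lt_trans (bval_sub hv2 sub2) _; apply: lt_le_trans hlt _.
      apply: bval_sub => //; exact: subset_trans (subD1set _ _) sub1.
    have [g gin] : exists g, g \in ~: A by apply/set0Pn.
    have hC : C2 v1 v2 (~: A).
      apply: swapC2; exists g; split => //; apply: le_trans (ltW lt2).
      by apply: bval_sub => //; apply: subD1set.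
    have lt1 : bval v1 A < bval v1 (~: A).
      apply: lt_le_trans (env' g gin) _; by apply: bval_sub => //; apply: subD1set.
    have : welfare v1 v2 (~: A) <= W by apply: leW.
    apply/negP; rewrite -ltNge; apply: le_lt_trans wA _.
    by rewrite wswap /welfare addrC [X in _ < X]addrC; apply: ltrD.
apply/eqP; rewrite eq_le; apply/andP; split.
- apply: bmax_le => // B /andP [_ hB]; exact: leW.
- have hE := @le_bmax _ _ (welfare v1 v2) (EF1 v1 v2) A EA.
  exact: (le_trans wA hE).
Qed.
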